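(* Let $\{\mathcal{C}_n\}$ be a sequence of binary linear codes with blocklengths $N_n\to\infty$ and rates $r_n\to r$ for some $r\in(0,1)$. Suppose there are sequences $0\le a_n<b_n\le1$ with $a_n\to0$, $b_n\to1$, and $w_n\to\infty$ such that the average EXIT function $h^{(n)}$ of $\mathcal{C}_n$ satisfies $$\frac{d h^{(n)}(p)}{dp}\ge w_n\log(N_n)\,h^{(n)}(p)\big(1-h^{(n)}(p)\big)\quad\text{for all }a_n<p<b_n.$$ Then $\{\mathcal{C}_n\}$ is capacity achieving on the BEC under block-MAP decoding.
   Context: Binary linear codes are assumed proper and of minimum distance at least $2$; rate $=K/N$; $\log$ is natural. A uniform codeword $\underline{X}$ is sent over $\mathrm{BEC}(p)$ (each bit erased independently with probability $p$), giving $\underline{Y}$. The average EXIT function is $h(p)=\frac1N\sum_{i=1}^N H(X_i\mid\underline{Y}_{\sim i})$ (entropy in bits; $\underline{Y}_{\sim i}$ omits coordinate $i$). $P_B(p)$ is the probability that $\underline{X}$ is not uniquely determined by $\underline{Y}$. A sequence of codes with rates $r_n\to r\in(0,1)$ is capacity achieving under block-MAP decoding if $\lim_n P_B^{(n)}(p)=0$ for every $p\in[0,1-r)$. *)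

(* Defs.v *)
From Stdlib Require Import Reals.
From mathcomp Require Import all_boot.
Set Implicit Arguments. Unset Strict Implicit. Unset Printing Implicit Defensive.

(* Binary words of length N: functions 'I_N -> bool (bool = F_2, true = 1). *)
Definition word (N : nat) := {ffun 'I_N -> bool}.
Definition wzero (N : nat) : word N := [ffun _ => false].
Definition wxor (N : nat) (x y : word N) : word N := [ffun j => xorb (x j) (y j)].

Definition linear_code (N : nat) (C : {set word N}) : Prop :=
  wzero N \in C /\ (forall x y, x \in C -> y \in C -> wxor x y \in C).

Definition proper_code (N : nat) (C : {set word N}) : Prop :=
  forall i : 'I_N, exists x, x \in C /\ x i = true.

Definition min_dist_ge2 (N : nat) (C : {set word N}) : Prop :=
  forall x y, x \in C -> y \in C -> x != y -> 2 <= #|[set j | x j != y j]|.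

Local Open Scope R_scope.

(* Rate K/N where |C| = 2^K. *)
Definition rate (N : nat) (C : {set word N}) : R :=
  (ln (INR #|C|) / ln 2) / INR N.

(* Probability of erasure pattern E (set of erased coordinates) on BEC(p). *)
Definition perasure (N : nat) (p : R) (E : {set 'I_N}) : R :=
  pow p #|E| * pow (1 - p) (N - #|E|).

Definition log2 (x : R) : R := ln x / ln 2.

(* Codewords consistent with the observation of x under erasure pattern E,
   coordinate i omitted (the observation Y_{~i}). *)
Definition consistent_noti (N : nat) (C : {set word N}) (x : word N)
  (E : {set 'I_N}) (i : 'I_N) : {set word N} :=
  [set c in C | [forall j, ((j \notin E) && (j != i)) ==> (c j == x j)]].

(* H(X_i | Y_{~i}) in bits, for X uniform on C sent over BEC(p):
   - E[ log2 P(X_i = x_i | Y_{~i}) ]. *)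
Definition Hcond (N : nat) (C : {set word N}) (p : R) (i : 'I_N) : R :=
  - \big[Rplus/0]_(x in C) \big[Rplus/0]_(E : {set 'I_N})
      (/ INR #|C| * perasure p E *
       log2 (INR #|[set c in consistent_noti C x E i | c i == x i]|
             / INR #|consistent_noti C x E i|)).

Definition exit_fun (N : nat) (C : {set word N}) (p : R) : R :=
  / INR N * \big[Rplus/0]_(i : 'I_N) Hcond C p i.

Definition consistent (N : nat) (C : {set word N}) (x : word N)
  (E : {set 'I_N}) : {set word N} :=
  [set c in C | [forall j, (j \notin E) ==> (c j == x j)]].

(* Block-MAP error probability: X not uniquely determined by Y. *)
Definition PB (N : nat) (C : {set word N}) (p : R) : R :=
  \big[Rplus/0]_(x in C) \big[Rplus/0]_(E : {set 'I_N})
    (/ INR #|C| * perasure p E *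
     (if (1 < #|consistent C x E|)%N then 1 else 0)).

(* Capacity achieving under block-MAP decoding, for rates converging to r. *)
Definition capacity_achieving (N : nat -> nat) (C : forall n, {set word (N n)})
  (r : R) : Prop :=
  forall p, 0 <= p < 1 - r -> Un_cv (fun n => PB (C n) p) 0.

(* Main.v *)
Require Import Defs.
From Stdlib Require Import Reals Lra FunctionalExtensionality ClassicalEpsilon.
From HB Require Import structures.
From mathcomp Require Import all_boot zify.
Local Open Scope R_scope.
Lemma Rplus_assoc' : associative Rplus. Proof. by move=> x y z; rewrite Rplus_assoc. Qed.
HB.instance Definition _ := Monoid.isComLaw.Build R 0 Rplus Rplus_assoc' Rplus_comm Rplus_0_l.


Lemma sumR_distr (I : Type) (r : seq I) (P : pred I) (F : I -> R) c :
  c * \big[Rplus/0]_(i <- r | P i) F i = \big[Rplus/0]_(i <- r | P i) (c * F i).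
Proof.
apply: (big_rec2 (fun x y => c * x = y)); first by rewrite Rmult_0_r.
by move=> i x y _ <-; rewrite Rmult_plus_distr_l.
Qed.

Lemma sumR_le (I : Type) (r : seq I) (P : pred I) (F G : I -> R) :
  (forall i, P i -> F i <= G i) ->
  \big[Rplus/0]_(i <- r | P i) F i <= \big[Rplus/0]_(i <- r | P i) G i.
Proof.
move=> H; apply: (big_rec2 (fun x y => x <= y)); first lra.
move=> i x y Pi Hxy; have := H i Pi; lra.
Qed.

Lemma sumR_ge0 (I : Type) (r : seq I) (P : pred I) (F : I -> R) :
  (forall i, P i -> 0 <= F i) -> 0 <= \big[Rplus/0]_(i <- r | P i) F i.
Proof.
move=> H; apply: (big_rec (fun x => 0 <= x)); first lra.
move=> i x Pi Hx; have := H i Pi; lra.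
Qed.

Lemma sumR_deriv (I : Type) (r : seq I) (P : pred I) (F F' : I -> R -> R) x :
  (forall i, P i -> derivable_pt_lim (F i) x (F' i x)) ->
  derivable_pt_lim (fun y => \big[Rplus/0]_(i <- r | P i) F i y) x
                   (\big[Rplus/0]_(i <- r | P i) F' i x).
Proof.
move=> H; elim: r => [|j r IH].
  have -> : (fun y => \big[Rplus/0]_(i <- [::] | P i) F i y) = fun _ => 0.
    by apply: functional_extensionality => y; rewrite big_nil.
  rewrite big_nil; exact: derivable_pt_lim_const.
have -> : (fun y => \big[Rplus/0]_(i <- j :: r | P i) F i y) =
   fun y => (if P j then F j y else 0) + \big[Rplus/0]_(i <- r | P i) F i y.
  apply: functional_extensionality => y; rewrite big_cons.
  by case: (P j) => //; rewrite Rplus_0_l.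
rewrite big_cons.
case Pj: (P j).
  apply: (derivable_pt_lim_plus (F j) (fun y => \big[Rplus/0]_(i <- r | P i) F i y)).
  exact: H. exact: IH.
have := derivable_pt_lim_plus (fun _ => 0) (fun y => \big[Rplus/0]_(i <- r | P i) F i y) x 0 _ (derivable_pt_lim_const 0 x) IH.
by rewrite Rplus_0_l.
Qed.

Lemma sumR_const (T : finType) (A : {pred T}) c :
  \big[Rplus/0]_(i in A) c = INR #|A| * c.
Proof.
rewrite big_const; elim: #|A| => [|k IH]; first by rewrite /=; lra.
rewrite S_INR -/(iter k _ _) /= IH; lra.
Qed.

Lemma mono_deriv (f f' : R -> R) x y :
  x <= y -> (forall t, x <= t <= y -> derivable_pt_lim f t (f' t)) ->
  (forall t, x <= t <= y -> 0 <= f' t) -> f x <= f y.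
Proof.
move=> Hxy Hd Hp; case: (Rle_lt_or_eq_dec _ _ Hxy) => [lt|<-]; last lra.
have [c [Hc Hc2]] := MVT_cor2 f f' x y lt Hd.
have := Hp c (conj (Rlt_le _ _ (proj1 Hc2)) (Rlt_le _ _ (proj2 Hc2))).
move=> H0; have : 0 <= f' c * (y - x) by apply: Rmult_le_pos; lra.
lra.
Qed.

Lemma growth (u u' : R -> R) k x y :
  x <= y -> (forall t, x <= t <= y -> 0 < u t) ->
  (forall t, x <= t <= y -> derivable_pt_lim u t (u' t)) ->
  (forall t, x <= t <= y -> k * u t <= u' t) ->
  k * (y - x) <= ln (u y) - ln (u x).
Proof.
move=> Hxy Hpos Hd Hk.
pose F t := ln (u t) - k * t.
have := mono_deriv F (fun t => / u t * u' t - k) x y Hxy.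
rewrite /F => H.
suff : ln (u x) - k * x <= ln (u y) - k * y by lra.
apply: H.
  move=> t Ht; apply: derivable_pt_lim_minus.
    apply: (derivable_pt_lim_comp u ln); first exact: Hd.
    exact: derivable_pt_lim_ln (Hpos t Ht).
  have := derivable_pt_lim_scal id k t 1 (derivable_pt_lim_id t).
  by rewrite Rmult_1_r.
move=> t Ht; have H1 := Hk t Ht; have H2 := Hpos t Ht.
have : k <= / u t * u' t.
  apply: (Rmult_le_reg_l (u t)) => //.
  rewrite -Rmult_assoc Rinv_r; lra.
lra.
Qed.

Lemma ln2_pos : 0 < ln 2.
Proof. rewrite -ln_1; apply: ln_increasing; lra. Qed.
Local Open Scope R_scope.

Section Comb.
Variable N : nat.
Variable C : {set word N}.
Hypothesis linC : linear_code C.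

Lemma wxorE (x y : word N) (j : 'I_N) : wxor x y j = xorb (x j) (y j).
Proof. by rewrite /wxor ffunE. Qed.

Lemma wxorK (d : word N) : involutive (fun c => wxor c d).
Proof. by move=> c; apply/ffunP => j; rewrite !wxorE; case: (c j); case: (d j). Qed.

Lemma wxor_inj (d : word N) : injective (fun c => wxor c d).
Proof. exact: inv_inj (wxorK d). Qed.

Lemma wxorC_mem x y : x \in C -> y \in C -> wxor x y \in C.
Proof. by case: linC => _ H; apply: H. Qed.

Definition amb (E : {set 'I_N}) (i : 'I_N) : bool :=
  [exists d in C, d i && [forall j, ((j \notin E) && (j != i)) ==> ~~ d j]].

Definition Aval E i : R := if amb E i then 1 else 0.

Lemma log2_ratio x E i : x \in C ->
  log2 (INR #|[set c in consistent_noti C x E i | c i == x i]|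
        / INR #|consistent_noti C x E i|) = - Aval E i.
Proof.
move=> xC.
set S := consistent_noti C x E i.
set S1 := [set c in S | c i == x i].
have xS1 : x \in S1.
  rewrite !inE xC eqxx andbT /=; apply/forallP => j; exact/implyP.
have S1gt : (0 < #|S1|)%N by apply/card_gt0P; exists x.
have memS (c : word N) : (c \in S) = (c \in C) && [forall j, ((j \notin E) && (j != i)) ==> (c j == x j)].
  by rewrite !inE.
rewrite /Aval; case: ifP => Hamb.
- case/existsP: Hamb => d /andP [dC /andP [di /forallP dz]].
  set T := [set c in S | c i != x i].
  have cardS : #|S| = (#|S1| + #|T|)%N.
    rewrite -(cardsID [set c : word N | c i == x i] S); congr (_ + _)%N.
      by apply: eq_card => c; rewrite !inE.
    by apply: eq_card => c; rewrite !inE; case: (c \in C); case: (_ == _) =>/=; rewrite ?andbF ?andbT.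

  have mapS (c : word N) : c \in S -> wxor c d \in S.
    rewrite !memS => /andP [cC /forallP cx]; rewrite wxorC_mem //=.
    apply/forallP => j; apply/implyP => Hj.
    move: (implyP (dz j) Hj) (implyP (cx j) Hj); rewrite wxorE.
    by case: (d j); case: (c j) => //=.
  have flip (c : word N) : wxor c d i = ~~ c i by rewrite wxorE di; case: (c i).
  have le1 : (#|S1| <= #|T|)%N.
    rewrite -(card_imset S1 (wxor_inj d)); apply: subset_leq_card.
    apply/subsetP => y /imsetP [c cS1 ->].
    move: cS1; rewrite !inE => /andP [cS ci]; rewrite -!memS.
    by rewrite (mapS c ltac:(by rewrite memS)) /= wxorE di (eqP ci); case: (x i).
  have le2 : (#|T| <= #|S1|)%N.
    rewrite -(card_imset T (wxor_inj d)); apply: subset_leq_card.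
    apply/subsetP => y /imsetP [c cT ->].
    move: cT; rewrite !inE => /andP [cS ci]; rewrite -!memS.
    by rewrite (mapS c ltac:(by rewrite memS)) /= wxorE di; move: ci; case: (c i); case: (x i).
  have eqT : #|T| = #|S1| by apply/eqP; rewrite eqn_leq le1 le2.
  rewrite cardS eqT plus_INR.
  have pos : 0 < INR #|S1| by apply: lt_0_INR; apply/ltP.
  have -> : INR #|S1| / (INR #|S1| + INR #|S1|) = / 2 by field; lra.
  rewrite /log2 ln_Rinv; last lra.
  have := ln2_pos => h; field; lra.
- have eqS : S1 = S.
    apply/setP => c; rewrite inE; apply/andP/idP => [[] //|cS]; split => //.
    apply/negPn/negP => ci.
    move/negbT: Hamb => /existsP; apply.
    exists (wxor c x); rewrite wxorC_mem //; last by move: cS; rewrite memS => /andP [].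
    rewrite wxorE /=; apply/andP; split.
      by move: ci; case: (c i); case: (x i).
    move: cS; rewrite memS => /andP [_ /forallP cx].
    apply/forallP => j; apply/implyP => Hj; rewrite wxorE (eqP (implyP (cx j) Hj)).
    by case: (x j).
  rewrite eqS.
  have pos : 0 < INR #|S| by rewrite -eqS; apply: lt_0_INR; apply/ltP.
  rewrite /Rdiv Rinv_r; last lra.
  by rewrite /log2 ln_1 /Rdiv Rmult_0_l Ropp_0.
Qed.
End Comb.
Arguments amb {N} C E i.
Arguments Aval {N} C E i.
Arguments wxorE {N} x y j.
Arguments wxor_inj {N} d.
Local Open Scope R_scope.

Lemma perasure_ge0 N p (E : {set 'I_N}) : 0 <= p <= 1 -> 0 <= perasure p E.
Proof. move=> Hp; rewrite /perasure; apply: Rmult_le_pos; apply: pow_le; lra. Qed.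

Lemma Aval_ge0 N C (E : {set 'I_N}) i : 0 <= Aval C E i.
Proof. rewrite /Aval; case: ifP => _; lra. Qed.

Lemma card_C_pos N (C : {set word N}) : linear_code C -> 0 < INR #|C|.
Proof. case=> z _; apply: lt_0_INR; apply/ltP/card_gt0P; by exists (wzero N). Qed.

Lemma Hcond_eq N (C : {set word N}) p i : linear_code C ->
  Hcond C p i = \big[Rplus/0]_(E : {set 'I_N}) (perasure p E * Aval C E i).
Proof.
move=> linC; rewrite /Hcond.
have cpos := card_C_pos N C linC.
rewrite (eq_bigr (fun _ => - / INR #|C| * \big[Rplus/0]_(E : {set 'I_N}) (perasure p E * Aval C E i))).
  rewrite sumR_const; field; lra.
move=> x xC; rewrite sumR_distr; apply: eq_bigr => E _.
rewrite log2_ratio //; ring.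
Qed.

Lemma PB_le N (C : {set word N}) p : linear_code C -> 0 <= p <= 1 ->
  PB C p <= \big[Rplus/0]_(i : 'I_N) Hcond C p i.
Proof.
move=> linC Hp.
have cpos := card_C_pos N C linC.
under eq_bigr => i _ do rewrite Hcond_eq //.
rewrite exchange_big /=.
rewrite /PB.
apply: (Rle_trans _ (\big[Rplus/0]_(x in C) (/ INR #|C| *
   \big[Rplus/0]_(E : {set 'I_N}) \big[Rplus/0]_(i : 'I_N) (perasure p E * Aval C E i)))).
  apply: sumR_le => x xC; rewrite sumR_distr; apply: sumR_le => E _.
  rewrite Rmult_assoc; apply: Rmult_le_compat_l; first by apply: Rlt_le; apply: Rinv_0_lt_compat.
  rewrite -sumR_distr; apply: Rmult_le_compat_l; first exact: perasure_ge0.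
  case: ifP => H1; last by apply: sumR_ge0 => *; exact: Aval_ge0.
  have : [exists c in consistent C x E, c != x].
    case E0: [exists c in consistent C x E, c != x] => //.
    have : consistent C x E \subset [set x].
      apply/subsetP => c cS; rewrite inE; case E1 : (c == x) => //.
      have : [exists c in consistent C x E, c != x] by apply/exists_inP; exists c; rewrite ?E1.
      by rewrite E0.
    move/subset_leq_card; rewrite cards1 => H2.
    by move: H1; rewrite ltnNge H2.
  case/exists_inP => c cS cx.
  have [j cj] : exists j, c j != x j.
    apply/existsP; case E0 : [exists j, c j != x j] => //.
    have cxe : c = x.
      apply/ffunP => j; case E1 : (c j == x j); first exact/eqP.
      have : [exists j, c j != x j] by apply/existsP; exists j; rewrite E1.
      by rewrite E0.
    by move: cx; rewrite cxe eqxx.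
  move: cS; rewrite inE => /andP [cC /forallP cagree].
  have jE : j \in E.
    case E2 : (j \in E) => //.
    by move: cj; rewrite (implyP (cagree j) (negbT E2)).
  have ambj : amb C E j.
    apply/exists_inP; exists (wxor c x); first by case: linC => _; apply.
    rewrite wxorE; apply/andP; split; first by move: cj; case: (c j); case: (x j).
    apply/forallP => k; apply/implyP => /andP [kE _].
    rewrite wxorE (eqP (implyP (cagree k) kE)); by case: (x k).
  rewrite (bigD1 j) //= {1}/Aval ambj.
  rewrite -{1}(Rplus_0_r 1); apply: Rplus_le_compat_l; apply: sumR_ge0 => k _; exact: Aval_ge0.
rewrite (eq_bigr (fun _ => / INR #|C| * \big[Rplus/0]_(E : {set 'I_N}) \big[Rplus/0]_(i : 'I_N) (perasure p E * Aval C E i))) //.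
rewrite sumR_const -Rmult_assoc Rinv_r; [rewrite Rmult_1_l; exact: Rle_refl | lra].
Qed.
Local Open Scope R_scope.

Section Deriv.
Variable N : nat.

Definition Qw (p : R) (E : {set 'I_N}) := p ^ #|E| * (1 - p) ^ ((N - #|E|)%N).-1.
Definition dP (p : R) (E : {set 'I_N}) :=
  INR #|E| * p ^ (#|E|).-1 * (1 - p) ^ (N - #|E|)%N
  - INR (N - #|E|)%N * p ^ #|E| * (1 - p) ^ ((N - #|E|)%N).-1.

Lemma perasure_deriv p E : derivable_pt_lim (fun q => perasure q E) p (dP p E).
Proof.
rewrite /perasure /dP.
have h1 := derivable_pt_lim_pow p #|E|.
have h2 : derivable_pt_lim (fun q => (1 - q) ^ (N - #|E|)%N) p
            (- (INR (N - #|E|)%N * (1 - p) ^ ((N - #|E|)%N).-1)).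
  have := derivable_pt_lim_comp (fun q => 1 - q) (pow^~ (N - #|E|)%N) p (-1) _ _
     (derivable_pt_lim_pow (1 - p) (N - #|E|)%N).
  rewrite /Ranalysis1.comp => H.
  have e : INR (N - #|E|)%N * (1 - p) ^ ((N - #|E|)%N).-1 * -1 = - (INR (N - #|E|)%N * (1 - p) ^ ((N - #|E|)%N).-1) by ring.
  rewrite -e; apply: H.
  have := derivable_pt_lim_minus (fun _ => 1) id p 0 1 (derivable_pt_lim_const 1 p) (derivable_pt_lim_id p).
  by rewrite Rminus_0_l.
have := derivable_pt_lim_mult (pow^~ #|E|) (fun q => (1 - q) ^ (N - #|E|)%N) p _ _ h1 h2.
move=> H; have e : INR #|E| * p ^ (#|E|).-1 * (1 - p) ^ (N - #|E|)%N -
  INR (N - #|E|)%N * p ^ #|E| * (1 - p) ^ ((N - #|E|)%N).-1 =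
  INR #|E| * p ^ (#|E|).-1 * (1 - p) ^ (N - #|E|)%N +
  p ^ #|E| * - (INR (N - #|E|)%N * (1 - p) ^ ((N - #|E|)%N).-1) by ring.
by rewrite e.
Qed.

Definition toggle (i : 'I_N) (E : {set 'I_N}) := if i \in E then E :\ i else i |: E.

Lemma toggleK i : involutive (toggle i).
Proof.
move=> E; rewrite {2}/toggle; case: ifP => iE; rewrite /toggle.
  by rewrite setD11 setD1K.
by rewrite setU11 setU1K // iE.
Qed.

Lemma sum_in_notin (i : 'I_N) (F : {set 'I_N} -> R) :
  \big[Rplus/0]_(E : {set 'I_N} | i \in E) F E = \big[Rplus/0]_(E : {set 'I_N} | i \notin E) F (i |: E).
Proof.
rewrite (reindex (toggle i)); last by apply: onW_bij; exact: inv_bij (toggleK i).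
apply: eq_big => E.
  by rewrite /toggle; case: ifP => iE; rewrite ?setD11 ?setU11 ?iE.
by rewrite /toggle; case: ifP => iE; rewrite ?setD11 ?setU11.
Qed.

Lemma card_lt_notin i (E : {set 'I_N}) : i \notin E -> (#|E| < N)%N.
Proof.
move=> iE; have H := cardsC E; rewrite card_ord in H.
suff : (#|E| < #|E| + #|~: E|)%N by rewrite H.
rewrite -[X in (X < _)%N]addn0 ltn_add2l; apply/card_gt0P; exists i; by rewrite inE.
Qed.

Lemma cardU1_notin i (E : {set 'I_N}) : i \notin E -> #|i |: E| = (#|E|).+1.
Proof. by move=> iE; rewrite cardsU1 iE. Qed.

Lemma pairing (i : 'I_N) (p : R) (G : {set 'I_N} -> R) :
  (forall E : {set 'I_N}, i \notin E -> G (i |: E) = G E) ->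
  \big[Rplus/0]_(E : {set 'I_N}) (perasure p E * G E) = \big[Rplus/0]_(E : {set 'I_N} | i \notin E) (Qw p E * G E).
Proof.
move=> HG.
rewrite (bigID (fun E : {set 'I_N} => i \in E)) /= sum_in_notin -big_split /=.
apply: eq_bigr => E iE; rewrite HG // /perasure /Qw cardU1_notin //.
have lt := card_lt_notin _ _ iE.
have -> : (N - #|E|)%N = (((N - #|E|)%N).-1).+1 by rewrite prednK // subn_gt0.
rewrite subnS /=; ring.
Qed.

Lemma Phi_deriv (g : {set 'I_N} -> R) p :
  derivable_pt_lim (fun q => \big[Rplus/0]_(E : {set 'I_N}) (perasure q E * g E)) p
    (\big[Rplus/0]_(i : 'I_N) \big[Rplus/0]_(E : {set 'I_N} | i \notin E) (Qw p E * (g (i |: E) - g E))).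
Proof.
have H := sumR_deriv _ (index_enum {set 'I_N}) xpredT (fun E q => perasure q E * g E)
   (fun E q => dP q E * g E) p.
have -> : \big[Rplus/0]_(i : 'I_N) \big[Rplus/0]_(E : {set 'I_N} | i \notin E) (Qw p E * (g (i |: E) - g E))
   = \big[Rplus/0]_(E : {set 'I_N}) (dP p E * g E).
  2: apply: H => E _.
  2: have := derivable_pt_lim_mult (fun q => perasure q E) (fun _ => g E) p _ _ (perasure_deriv p E) (derivable_pt_lim_const (g E) p).
  2: by rewrite Rmult_0_r Rplus_0_r.
  have e1 (E : {set 'I_N}) : dP p E * g E =
     \big[Rplus/0]_(i : 'I_N) (if i \in E then p ^ (#|E|).-1 * (1 - p) ^ (N - #|E|)%N * g E else 0)
   - \big[Rplus/0]_(i : 'I_N) (if i \notin E then Qw p E * g E else 0).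
    rewrite -!big_mkcond /= !sumR_const.
    have -> : #|[pred i | i \notin E]| = (N - #|E|)%N.
      have HH := cardsC E; rewrite card_ord in HH.
      have le : (#|E| <= N)%N by apply: (leq_trans (leq_addr #|~: E| #|E|)); rewrite HH.
      have -> : (N - #|E|)%N = #|~: E| by apply/eqP; rewrite -(eqn_add2l #|E|) subnKC // HH.
      by apply: eq_card => j; rewrite !inE.
    rewrite /dP /Qw; set k := #|E|; ring.
  rewrite (eq_bigr _ (fun E _ => e1 E)).
  have split (I : Type) r (P : pred I) (F1 F2 : I -> R) :
     \big[Rplus/0]_(j <- r | P j) (F1 j - F2 j) =
     \big[Rplus/0]_(j <- r | P j) F1 j - \big[Rplus/0]_(j <- r | P j) F2 j.
    apply: (big_rec3 (fun a b c => a = b - c)); first ring.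
    by move=> j a b c _ ->; ring.
  rewrite (split {set 'I_N} (index_enum _) (fun _ => true)).
  rewrite (exchange_big _ (index_enum {set 'I_N}) (index_enum 'I_N)).
  rewrite (exchange_big _ (index_enum {set 'I_N}) (index_enum 'I_N)).
  rewrite -(split 'I_N (index_enum _) (fun _ => true)).
  apply: eq_bigr => i _.
  rewrite -!big_mkcond /= sum_in_notin.
  first [rewrite -split | apply: (etrans _ (esym (split _ _ _ _ _)))]; apply: eq_bigr => E iE.
  rewrite cardU1_notin // /Qw subnS /=; ring.
Qed.
End Deriv.
Local Open Scope R_scope.

Section Code.
Variable N : nat.
Variable C : {set word N}.
Hypothesis linC : linear_code C.

Definition Zs (E : {set 'I_N}) := [set c in C | [forall j, (j \notin E) ==> ~~ c j]].

Lemma wzero_Zs (E : {set 'I_N}) : wzero N \in Zs E.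
Proof.
rewrite inE; case: linC => -> _ /=; apply/forallP => j; apply/implyP => _.
by rewrite /wzero ffunE.
Qed.

Lemma Zs_card_pos (E : {set 'I_N}) : (0 < #|Zs E|)%N.
Proof. apply/card_gt0P; exists (wzero N); exact: wzero_Zs. Qed.

Lemma Zs_grow (i : 'I_N) (E : {set 'I_N}) : i \notin E ->
  #|Zs (i |: E)| = if amb C E i then (#|Zs E| + #|Zs E|)%N else #|Zs E|.
Proof.
move=> iE.
have sub : Zs E \subset Zs (i |: E).
  apply/subsetP => c; rewrite !inE => /andP [cC /forallP H]; rewrite cC /=.
  apply/forallP => j; apply/implyP; rewrite !inE negb_or => /andP [_ jE].
  exact: (implyP (H j) jE).
have ci_false c : c \in Zs E -> c i = false.
  rewrite inE => /andP [_ /forallP H]; exact: negbTE (implyP (H i) iE).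
have back c : c \in Zs (i |: E) -> c i = false -> c \in Zs E.
  rewrite !inE => /andP [cC /forallP H] ci; rewrite cC /=.
  apply/forallP => j; apply/implyP => jE.
  case: (eqVneq j i) => [->|ji]; first by rewrite ci.
  by apply: (implyP (H j)); rewrite !inE negb_or ji jE.
case: ifP => Hamb.
- case/exists_inP: Hamb => d dC /andP [di /forallP dz].
  have dzero (j : 'I_N) : j \notin i |: E -> d j = false.
    rewrite !inE negb_or => /andP [ji jE]; apply: negbTE; apply: (implyP (dz j)).
    by rewrite jE ji.
  rewrite -(cardsID (Zs E) (Zs (i |: E))) (setIidPr sub); congr (_ + _)%N.
  apply/eqP; rewrite eqn_leq; apply/andP; split.
  + rewrite -(card_imset _ (wxor_inj d)); apply: subset_leq_card.
    apply/subsetP => y /imsetP [c cA ->]; move: (cA); rewrite inE => /andP [cnB cZ].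
    have cit : c i = true.
      by case E1 : (c i) => //; move: cnB; rewrite (back c cZ E1).
    rewrite inE in cZ; case/andP: cZ => cC /forallP cz.
    rewrite inE; case: linC => _ lin; rewrite lin //=.
    apply/forallP => j; apply/implyP => jE; rewrite wxorE.
    case: (eqVneq j i) => [->|ji]; first by rewrite cit di.
    have jn : j \notin i |: E by rewrite !inE negb_or ji jE.
    by rewrite (negbTE (implyP (cz j) jn)) dzero.
  + rewrite -(card_imset _ (wxor_inj d)); apply: subset_leq_card.
    apply/subsetP => y /imsetP [c cB ->].
    have cif := ci_false c cB.
    rewrite in_setD; apply/andP; split.
      by apply/negP => /ci_false; rewrite wxorE cif di.
    move: cB; rewrite inE => /andP [cC /forallP cz].
    rewrite inE; case: linC => _ lin; rewrite lin //=.
    apply/forallP => j; apply/implyP => jn; rewrite wxorE dzero //.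
    move: jn; rewrite !inE negb_or => /andP [_ jE].
    by rewrite (negbTE (implyP (cz j) jE)).
- apply/eqP; rewrite eqn_leq (subset_leq_card sub) andbT; apply: subset_leq_card.
  apply/subsetP => c cA; apply: back => //.
  case E1 : (c i) => //.
  move: Hamb; have -> // : amb C E i.
  move: cA; rewrite inE => /andP [cC /forallP cz].
  apply/exists_inP; exists c => //; rewrite E1 /=.
  apply/forallP => j; apply/implyP => /andP [jE ji]; apply: (implyP (cz j)).
  by rewrite !inE negb_or ji jE.
Qed.

Definition fZ (E : {set 'I_N}) := log2 (INR #|Zs E|).

Lemma fZ_step (i : 'I_N) (E : {set 'I_N}) : i \notin E -> fZ (i |: E) - fZ E = Aval C E i.
Proof.
move=> iE; rewrite /fZ Zs_grow // /Aval.
have pos : 0 < INR #|Zs E| by apply: lt_0_INR; apply/ltP; exact: Zs_card_pos.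
have l2 := ln2_pos.
case: ifP => _; last by rewrite Rminus_diag.
rewrite plus_INR /log2.
have -> : INR #|Zs E| + INR #|Zs E| = 2 * INR #|Zs E| by ring.
rewrite ln_mult; [field; lra | lra | lra].
Qed.

Definition Phi (p : R) := \big[Rplus/0]_(E : {set 'I_N}) (perasure p E * fZ E).

Lemma Phi_deriv_h p :
  derivable_pt_lim Phi p (\big[Rplus/0]_(i : 'I_N) Hcond C p i).
Proof.
have H := Phi_deriv _ fZ p.
have -> : \big[Rplus/0]_(i : 'I_N) Hcond C p i =
  \big[Rplus/0]_(i : 'I_N) \big[Rplus/0]_(E : {set 'I_N} | i \notin E) (Qw N p E * (fZ (i |: E) - fZ E)).
  apply: eq_bigr => i _; rewrite Hcond_eq // (pairing _ i p (fun E => Aval C E i)).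
    by apply: eq_bigr => E iE; rewrite fZ_step.
  move=> E iE; rewrite /Aval /amb; congr (if _ then _ else _).
  apply: eq_existsb => d; congr (_ && (_ && _)); apply: eq_forallb => j.
  congr (_ ==> _); rewrite !inE negb_or; by case: (j == i); rewrite ?andbF ?andbT.
exact: H.
Qed.
End Code.
Arguments Phi {N} C p.
Arguments Zs {N} C E.
Arguments fZ {N} C E.
Arguments wzero_Zs {N} C linC E.
Arguments Phi_deriv_h {N} C linC p.
Local Open Scope R_scope.

Lemma ln_le' x y : 0 < x -> x <= y -> ln x <= ln y.
Proof. move=> hx [h|<-]; [apply: Rlt_le; exact: ln_increasing | lra]. Qed.

Lemma exp_le' x y : x <= y -> exp x <= exp y.
Proof. move=> [h|<-]; [apply: Rlt_le; exact: exp_increasing | lra]. Qed.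

Lemma ln_le_exp x y : 0 < x -> ln x <= y -> x <= exp y.
Proof. move=> hx h; rewrite -(exp_ln x) //; exact: exp_le'. Qed.

Lemma exp_le_ln x y : 0 < x -> y <= ln x -> exp y <= x.
Proof. move=> hx h; rewrite -(exp_ln x) //; exact: exp_le'. Qed.

Section Claims.
Variables (h hd Phi : R -> R) (Nr c a b : R).
Hypothesis hab : 0 <= a /\ b <= 1.
Hypothesis c0 : 0 <= c.
Hypothesis h01 : forall t, 0 <= t <= 1 -> 0 <= h t <= 1.
Hypothesis Hd : forall t, a < t < b -> derivable_pt_lim h t (hd t) /\ c * h t * (1 - h t) <= hd t.

Lemma h_mono x y : a < x -> x <= y -> y < b -> h x <= h y.
Proof.
move=> ax xy yb; apply: (mono_deriv h hd) => // t Ht.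
  by apply: (proj1 (Hd t _)); lra.
have [_ H] := Hd t ltac:(lra).
have := h01 t ltac:(lra) => -[H1 H2].
apply: Rle_trans H; apply: Rmult_le_pos; [apply: Rmult_le_pos|]; lra.
Qed.

Lemma claimB p q : a < p -> p <= q -> q < b -> h q <= /2 -> h p <= exp (- (c / 2 * (q - p))).
Proof.
move=> ap pq qb hq.
have [h0 h1] := h01 p ltac:(lra).
case: h0 => hp; last by rewrite -hp; apply: Rlt_le; exact: exp_pos.
have Hg := growth h hd (c / 2) p q pq.
have : c / 2 * (q - p) <= ln (h q) - ln (h p).
  apply: Hg.
  - move=> t Ht; apply: Rlt_le_trans hp _; apply: h_mono; lra.
  - by move=> t Ht; apply: (proj1 (Hd t _)); lra.
  - move=> t Ht; have [_ H] := Hd t ltac:(lra).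
    have ht : h t <= /2 by apply: Rle_trans hq; apply: h_mono; lra.
    have [H1 _] := h01 t ltac:(lra).
    apply: Rle_trans H.
    have : c * h t * (1 - h t) - c / 2 * h t = c * h t * (/2 - h t) by field.
    have : 0 <= c * h t * (/ 2 - h t) by apply: Rmult_le_pos; [apply: Rmult_le_pos|]; lra.
    lra.
move=> H.
have lq : ln (h q) <= 0.
  have hqpos : 0 < h q by apply: Rlt_le_trans hp _; apply: h_mono; lra.
  rewrite -ln_1; apply: ln_le'; lra.
apply: ln_le_exp => //; lra.
Qed.

Hypothesis Phid : forall t, derivable_pt_lim Phi t (Nr * h t).
Hypothesis Nr0 : 0 < Nr.

Lemma Phi_mono x y : 0 <= x -> x <= y -> y <= 1 -> Phi x <= Phi y.
Proof.
move=> x0 xy y1; apply: (mono_deriv Phi (fun t => Nr * h t)) => // t Ht.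
have [H _] := h01 t ltac:(lra); apply: Rmult_le_pos; lra.
Qed.

Lemma claimA q d y rate : a < q -> 0 < d -> q + d <= y -> y < b ->
  / 2 < h q -> Phi 0 = 0 -> Phi 1 = Nr * rate ->
  (1 - exp (- (c / 2 * d))) * (y - q - d) <= rate.
Proof.
move=> aq d0 qdy yb hq P0 P1.
set eps := exp (- (c / 2 * d)).
have epos : 0 < eps by exact: exp_pos.
have hbig : forall t, q + d <= t <= y -> 1 - eps <= h t.
  move=> t Ht.
  have [_ ht1] := h01 t ltac:(lra).
  case: ht1 => ht1; last lra.
  have hm : forall s, q <= s <= t -> / 2 < h s /\ h s < 1.
    move=> s Hs; split.
      apply: Rlt_le_trans hq _; apply: h_mono; lra.
    apply: Rle_lt_trans ht1; apply: h_mono; lra.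
  pose u s := / (1 - h s).
  pose u' s := hd s / (1 - h s) ^ 2.
  have G := growth u u' (c / 2) q t ltac:(lra).
  have : c / 2 * (t - q) <= ln (u t) - ln (u q).
    apply: G.
    - move=> s Hs; have := hm s Hs => -[_ H]; rewrite /u; apply: Rinv_0_lt_compat; lra.
    - move=> s Hs.
      have [Hs1 _] := Hd s ltac:(lra).
      have Hs2 : derivable_pt_lim (fun s => 1 - h s) s (- hd s).
        have := derivable_pt_lim_minus (fun _ => 1) h s 0 (hd s) (derivable_pt_lim_const 1 s) Hs1.
        by rewrite Rminus_0_l.
      have nz : 1 - h s <> 0 by have := hm s Hs; lra.
      have H := derivable_pt_lim_div (fun _ => 1) (fun s => 1 - h s) s 0 (- hd s)
        (derivable_pt_lim_const 1 s) Hs2 nz.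
      have e : u = div_fct (fun _ => 1) (fun s => 1 - h s) by
        apply: FunctionalExtensionality.functional_extensionality => z; rewrite /u /div_fct /Rdiv Rmult_1_l.
      rewrite e /u'; have -> : hd s / (1 - h s) ^ 2 = (0 * (1 - h s) - - hd s * 1) / (1 - h s)² by
        rewrite /Rsqr; field; exact: nz.
      exact: H.
    - move=> s Hs; have [_ H] := Hd s ltac:(lra); have [H1 H2] := hm s Hs.
      rewrite /u /u'.
      have nz : 0 < 1 - h s by lra.
      have : c / 2 * (1 - h s) <= hd s.
        apply: Rle_trans H.
        have : c * h s * (1 - h s) - c / 2 * (1 - h s) = c * (1 - h s) * (h s - / 2) by field.
        have : 0 <= c * (1 - h s) * (h s - / 2) by apply: Rmult_le_pos; [apply: Rmult_le_pos|]; lra.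
        lra.
      move=> Hk.
      have -> : c / 2 * / (1 - h s) = (c / 2 * (1 - h s)) / (1 - h s) ^ 2 by field; lra.
      apply: Rmult_le_compat_r => //.
      apply: Rlt_le; apply: Rinv_0_lt_compat; apply: pow_lt; lra.
  move=> H.
  have luq : 0 <= ln (u q).
    have [H1 H2] := hm q ltac:(lra).
    rewrite -ln_1; apply: ln_le'; first lra.
    rewrite /u; rewrite -Rinv_1; apply: Rinv_le_contravar; lra.
  have : c / 2 * d <= ln (u t).
    have : c / 2 * d <= c / 2 * (t - q) by apply: Rmult_le_compat_l; lra.
    lra.
  move=> H3.
  have upos : 0 < u t by rewrite /u; apply: Rinv_0_lt_compat; lra.
  have := exp_le_ln (u t) (c / 2 * d) upos H3.
  rewrite /u => H4.
  have : 1 - h t <= eps.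
    rewrite /eps exp_Ropp.
    have : 0 < exp (c / 2 * d) by exact: exp_pos.
    move=> ep.
    apply: (Rmult_le_reg_l (exp (c / 2 * d))) => //.
    rewrite Rinv_r; last lra.
    have : exp (c / 2 * d) * (1 - h t) <= / (1 - h t) * (1 - h t).
      apply: Rmult_le_compat_r; lra.
    rewrite Rinv_l; lra.
  lra.
have Pq : 0 <= Phi (q + d) by rewrite -P0; apply: Phi_mono; lra.
have Py : Phi y <= Nr * rate by rewrite -P1; apply: Phi_mono; lra.
have : Nr * (1 - eps) * (y - (q + d)) <= Phi y - Phi (q + d).
  have := mono_deriv (fun t => Phi t - Nr * (1 - eps) * t) (fun t => Nr * h t - Nr * (1 - eps)) (q + d) y qdy.
  have M : (forall t, q + d <= t <= y -> derivable_pt_lim (fun t => Phi t - Nr * (1 - eps) * t) t (Nr * h t - Nr * (1 - eps))).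
    move=> t _; apply: derivable_pt_lim_minus; first exact: Phid.
    have := derivable_pt_lim_scal id (Nr * (1 - eps)) t 1 (derivable_pt_lim_id t).
    by rewrite Rmult_1_r.
  move=> /(_ M) H.
  have : Phi (q + d) - Nr * (1 - eps) * (q + d) <= Phi y - Nr * (1 - eps) * y.
    apply: H => t Ht; have := hbig t Ht.
    have : Nr * h t - Nr * (1 - eps) = Nr * (h t - (1 - eps)) by ring.
    move=> -> H1; apply: Rmult_le_pos; lra.
  lra.
move=> H.
have : Nr * ((1 - eps) * (y - q - d)) <= Nr * rate.
  have -> : Nr * ((1 - eps) * (y - q - d)) = Nr * (1 - eps) * (y - (q + d)) by ring.
  lra.
move=> H2; apply: (Rmult_le_reg_l Nr) => //.
Qed.
End Claims.
Local Open Scope R_scope.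

Lemma sumR_const_ord n c : \big[Rplus/0]_(i < n) c = INR n * c.
Proof.
rewrite big_const_ord; elim: n => [|k IH]; first by rewrite /=; lra.
rewrite S_INR -/(iter k _ _) /= IH; lra.
Qed.

Section Eval.
Variable N : nat.

Lemma sum_at0 (X : {set 'I_N} -> R) :
  \big[Rplus/0]_(E : {set 'I_N}) (perasure 0 E * X E) = X set0.
Proof.
rewrite (bigD1 set0) //= big1.
  by rewrite /perasure cards0 /= Rminus_0_r pow1; ring.
move=> E E0; rewrite /perasure pow_i; first ring.
by apply/ltP; rewrite card_gt0.
Qed.

Lemma sum_at1 (X : {set 'I_N} -> R) :
  \big[Rplus/0]_(E : {set 'I_N}) (perasure 1 E * X E) = X setT.
Proof.
rewrite (bigD1 setT) //= big1.
  by rewrite /perasure cardsT card_ord subnn /= pow1; ring.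
move=> E ET.
have [i iE] : exists i : 'I_N, i \notin E.
  case: (boolP [exists i, i \notin E]) => [/existsP //|H].
  suff eE : E = setT by move: ET; rewrite eE eqxx.
  apply/setP => i; rewrite inE; case E1 : (i \in E) => //.
  by move: H; have -> : [exists i, i \notin E] by apply/existsP; exists i; rewrite E1.
have lt := card_lt_notin _ _ _ iE.
rewrite /perasure Rminus_diag (pow_i (N - #|E|)); first ring.
by apply/ltP; rewrite subn_gt0.
Qed.

Lemma Psi1 p : \big[Rplus/0]_(E : {set 'I_N}) (perasure p E * 1) = 1.
Proof.
pose Psi q := \big[Rplus/0]_(E : {set 'I_N}) (perasure q E * 1).
have D : forall q, derivable_pt_lim Psi q 0.
  move=> q; have := Phi_deriv N (fun _ => 1) q.
  rewrite big1 //= => i _; rewrite big1 // => E _; ring.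
have e0 : Psi 0 = 1 by rewrite /Psi sum_at0.
have D' : forall q, derivable_pt_lim (fun q => - Psi q) q (- 0).
  by move=> q; apply: derivable_pt_lim_opp.
have [le|le] := Rle_or_lt 0 p.
  have h1 := mono_deriv Psi (fun _ => 0) 0 p le (fun t _ => D t) (fun t _ => Rle_refl 0).
  have h2 := mono_deriv (fun q => - Psi q) (fun _ => - 0) 0 p le (fun t _ => D' t) (fun t _ => ltac:(lra)).
  change (Psi p = 1); cbv beta in h2; lra.
have le' : p <= 0 by lra.
have h1 := mono_deriv Psi (fun _ => 0) p 0 le' (fun t _ => D t) (fun t _ => Rle_refl 0).
have h2 := mono_deriv (fun q => - Psi q) (fun _ => - 0) p 0 le' (fun t _ => D' t) (fun t _ => ltac:(lra)).
change (Psi p = 1); cbv beta in h2; lra.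
Qed.
End Eval.

Section Code2.
Variable N : nat.
Variable C : {set word N}.
Hypothesis linC : linear_code C.

Lemma sumH_bounds p : 0 <= p <= 1 ->
  0 <= \big[Rplus/0]_(i : 'I_N) Hcond C p i <= INR N.
Proof.
move=> Hp; split.
  apply: sumR_ge0 => i _; rewrite Hcond_eq //; apply: sumR_ge0 => E _.
  apply: Rmult_le_pos; [exact: perasure_ge0 | exact: Aval_ge0].
rewrite -[INR N]Rmult_1_r -sumR_const_ord; apply: sumR_le => i _.
rewrite Hcond_eq // -(Psi1 N p); apply: sumR_le => E _.
apply: Rmult_le_compat_l; first exact: perasure_ge0.
by rewrite /Aval; case: ifP => _; lra.
Qed.

Lemma Phi0 : Phi C 0 = 0.
Proof.
rewrite /Phi sum_at0 /fZ.
have -> : Zs C set0 = [set wzero N].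
  apply/setP => c; rewrite !inE; apply/idP/idP.
    case/andP => _ /forallP H; apply/eqP/ffunP => j.
    by rewrite /wzero ffunE; apply: negbTE; apply: (implyP (H j)); rewrite inE.
  by move/eqP => ->; move: (wzero_Zs C linC set0); rewrite inE.
by rewrite cards1 /log2 /= ln_1 /Rdiv Rmult_0_l.
Qed.

Lemma Phi1 : Phi C 1 = ln (INR #|C|) / ln 2.
Proof.
rewrite /Phi sum_at1 /fZ.
have -> : Zs C setT = C.
  apply/setP => c; rewrite !inE; apply/andP/idP => [[] //|cC]; split => //.
  by apply/forallP => j; rewrite inE.
by [].
Qed.

Lemma PB_ge0 p : 0 <= p <= 1 -> 0 <= PB C p.
Proof.
move=> Hp; apply: sumR_ge0 => x _; apply: sumR_ge0 => E _.
apply: Rmult_le_pos; [apply: Rmult_le_pos|].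
- apply: Rlt_le; apply: Rinv_0_lt_compat; exact: card_C_pos.
- exact: perasure_ge0.
- case: ifP => _; lra.
Qed.

Lemma PB0 : PB C 0 = 0.
Proof.
apply: big1 => x xC.
transitivity (\big[Rplus/0]_(E : {set 'I_N}) (perasure 0 E * (/ INR #|C| * (if (1 < #|consistent C x E|)%N then 1 else 0)))).
  by apply: eq_bigr => E _; ring.
rewrite sum_at0.
have : (#|consistent C x set0| <= 1)%N.
  rewrite -(cards1 x); apply: subset_leq_card; apply/subsetP => c.
  rewrite !inE => /andP [_ /forallP H]; apply/eqP/ffunP => j.
  by apply/eqP; apply: (implyP (H j)); rewrite inE.
by move=> H; rewrite ltnNge H /=; ring.
Qed.
End Code2.
Arguments sumH_bounds {N C} linC p.
Arguments Phi0 {N C} linC.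
Arguments Phi1 {N} C.
Arguments PB_ge0 {N C} linC p.
Arguments PB0 {N C}.
Local Open Scope R_scope.

Theorem theorem5 (N : nat -> nat) (C : forall n, {set word (N n)})
  (r : R) (a b w : nat -> R) :
  (forall n, linear_code (C n) /\ proper_code (C n) /\ min_dist_ge2 (C n)) ->
  (forall M : nat, exists n0 : nat, forall n : nat, (n0 <= n)%N -> (M <= N n)%N) ->
  0 < r < 1 ->
  Un_cv (fun n => rate (C n)) r ->
  (forall n, 0 <= a n < b n /\ b n <= 1) ->
  Un_cv a 0 -> Un_cv b 1 -> cv_infty w ->
  (forall n (p : R), a n < p < b n ->
     exists l : R, derivable_pt_lim (exit_fun (C n)) p l /\
       w n * ln (INR (N n)) * exit_fun (C n) p * (1 - exit_fun (C n) p) <= l) ->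
  capacity_achieving C r.
Proof.
move=> Hcode HN Hr Hrate Hab Ha Hb Hw Hder p [p0 pr] eps eps0.
case: (Req_dec p 0) => [->|pnz].
  exists 0%nat => n _; rewrite PB0.
  rewrite /Rdist Rminus_0_r Rabs_R0; lra.
have ppos : 0 < p by lra.
set d := (1 - r - p) / 3.
have dpos : 0 < d by rewrite /d; lra.
have dle : d <= / 3 by rewrite /d; lra.
have pd : p + 3 * d = 1 - r by rewrite /d; field.
have l2 := ln2_pos.
have [n1 H1] := Ha p ppos.
have [n2 H2] := Hb (d / 2) ltac:(lra).
have [n5 H5] := Hrate (d / 4) ltac:(lra).
have [M [HM1 HM2]] := archimed_cor1 eps eps0.
have [n3 H3] := HN (maxn M 2).
set W := 16 / (d * d * ln 2) + 4 / d.
have [n4 H4] := Hw W.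
exists (maxn (maxn (maxn n1 n2) (maxn n3 n4)) n5) => n /leP Hn.
have an : a n < p.
  have := H1 n ltac:(apply/leP; lia); rewrite /Rdist Rminus_0_r => H.
  have := Rle_abs (a n); lra.
have bn : 1 - d / 2 < b n.
  have := H2 n ltac:(apply/leP; lia); rewrite /Rdist => H.
  have := Rabs_def2 _ _ H; lra.
have rn : rate (C n) < r + d / 4.
  have := H5 n ltac:(apply/leP; lia); rewrite /Rdist => H.
  have := Rabs_def2 _ _ H; lra.
have NM : (maxn M 2 <= N n)%N by apply: H3; lia.
have wn : W < w n by apply: H4; apply/leP; lia.
have [[an0 abn] bn1] := Hab n.
have linC := proj1 (Hcode n).
set Nr := INR (N n).
have N2 : 2 <= Nr by rewrite /Nr; change 2 with (INR 2); apply: le_INR; apply/leP; lia.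
have NMr : INR M <= Nr by rewrite /Nr; apply: le_INR; apply/leP; lia.
have lnN : ln 2 <= ln Nr by apply: ln_le'; lra.
have W0 : 0 < W.
  rewrite /W; have : 0 < 16 / (d * d * ln 2) by apply: Rdiv_lt_0_compat; [lra | apply: Rmult_lt_0_compat; [nra|lra]].
  have : 0 < 4 / d by apply: Rdiv_lt_0_compat; lra.
  lra.
set c := w n * ln Nr.
have c0 : 0 <= c by rewrite /c; apply: Rmult_le_pos; lra.
set h := exit_fun (C n).
set S := fun t => \big[Rplus/0]_(i : 'I_(N n)) Hcond (C n) t i.
have hS : forall t, h t = / Nr * S t by [].
have h01 : forall t, 0 <= t <= 1 -> 0 <= h t <= 1.
  move=> t Ht; have [s0 s1] : 0 <= S t <= Nr := sumH_bounds linC t Ht; rewrite hS; split.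
    apply: Rmult_le_pos => //; apply: Rlt_le; apply: Rinv_0_lt_compat; lra.
  apply: (Rmult_le_reg_l Nr); first lra.
  rewrite -Rmult_assoc Rinv_r; lra.
pose hd t := match excluded_middle_informative (a n < t < b n) with
  | left H => proj1_sig (constructive_indefinite_description _ (Hder n t H))
  | right _ => 0 end.
have Hd : forall t, a n < t < b n -> derivable_pt_lim h t (hd t) /\ c * h t * (1 - h t) <= hd t.
  move=> t Ht; rewrite /hd; case: excluded_middle_informative => // H.
  exact: proj2_sig (constructive_indefinite_description _ (Hder n t H)).
have Phid : forall t, derivable_pt_lim (Phi (C n)) t (Nr * h t).
  move=> t; have -> : Nr * h t = S t by rewrite hS; field; lra.
  exact: Phi_deriv_h.
have hab : 0 <= a n /\ b n <= 1 by [].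
have Nr0 : 0 < Nr by lra.
set q := p + d.
have hq : h q <= / 2.
  case: (Rle_or_lt (h q) (/ 2)) => // hq.
  have := claimA h hd (Phi (C n)) Nr c (a n) (b n) hab c0 h01 Hd Phid Nr0 q d (1 - d / 2) (rate (C n))
     ltac:(rewrite /q; lra) dpos ltac:(rewrite /q /d; lra) bn hq (Phi0 linC).
  have e1 : Phi (C n) 1 = Nr * rate (C n) by rewrite Phi1 /rate -/Nr; field; lra.
  move=> /(_ e1).
  set eps' := exp (- (c / 2 * d)).
  have ep0 : 0 < eps' by exact: exp_pos.
  have cbig : 16 / (d * d) <= c.
    rewrite /c; apply: (Rle_trans _ (W * ln 2)).
      rewrite /W Rmult_plus_distr_r; have : 0 <= 4 / d * ln 2 by apply: Rmult_le_pos; [apply: Rlt_le; apply: Rdiv_lt_0_compat|]; lra.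
      have -> : 16 / (d * d * ln 2) * ln 2 = 16 / (d * d) by field; lra.
      lra.
    apply: Rmult_le_compat; lra.
  have epsmall : eps' <= d / 8.
    rewrite /eps' exp_Ropp.
    have X := exp_ineq1_le (c / 2 * d).
    have : 8 / d <= c / 2 * d.
      have : c / 2 * d >= 16 / (d * d) / 2 * d by apply: Rle_ge; apply: Rmult_le_compat_r; lra.
      have -> : 16 / (d * d) / 2 * d = 8 / d by field; lra.
      lra.
    move=> Y.
    have ex0 : 0 < exp (c / 2 * d) by exact: exp_pos.
    have Z : 8 / d <= exp (c / 2 * d) by lra.
    apply: (Rmult_le_reg_l (exp (c / 2 * d))) => //.
    rewrite Rinv_r; last lra.
    have : 8 / d * (d / 8) = 1 by field; lra.
    have : 8 / d * (d / 8) <= exp (c / 2 * d) * (d / 8) by apply: Rmult_le_compat_r; lra.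
    lra.
  have -> : 1 - d / 2 - q - d = r + d / 2 by rewrite /q /d; field.
  move=> H.
  have : (1 - eps') * (r + d / 2) >= r + d / 4.
    have : eps' * (r + d / 2) <= d / 8 * 2 by apply: Rmult_le_compat; lra.
    nra.
  lra.
have hp := claimB h hd c (a n) (b n) hab c0 h01 Hd p q an ltac:(rewrite /q; lra) ltac:(rewrite /q; lra) hq.
move: hp; rewrite (_ : q - p = d); last by rewrite /q; ring.
move=> hp.
have p1 : p <= 1 by lra.
have pb := PB_le _ _ p linC (conj p0 p1).
have pb0 := PB_ge0 linC p (conj p0 p1).
rewrite /Rdist Rminus_0_r Rabs_right; last lra.
apply: (Rle_lt_trans _ (/ INR M)) => //.
apply: (Rle_trans _ (Nr * exp (- (c / 2 * d)))).
  apply: (Rle_trans _ (S p)) => //.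
  have -> : S p = Nr * h p by rewrite hS; field; lra.
  apply: Rmult_le_compat_l; lra.
have lnN0 : 0 < ln Nr by lra.
have : 2 * ln Nr <= c / 2 * d.
  rewrite /c.
  have : 4 / d <= w n.
    have : 0 <= 16 / (d * d * ln 2) by apply: Rlt_le; apply: Rdiv_lt_0_compat; [lra | apply: Rmult_lt_0_compat; [nra|lra]].
    rewrite /W in wn; lra.
  move=> Hw4.
  have : w n * ln Nr / 2 * d = (w n * d / 2) * ln Nr by field.
  have : 2 <= w n * d / 2.
    have : 4 / d * d / 2 = 2 by field; lra.
    have : 4 / d * d / 2 <= w n * d / 2 by apply: Rmult_le_compat_r; [lra|apply: Rmult_le_compat_r; lra].
    lra.
  move=> H1' e.
  rewrite e; apply: Rmult_le_compat_r; lra.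
move=> H.
have : exp (- (c / 2 * d)) <= exp (- (2 * ln Nr)) by apply: exp_le'; lra.
rewrite exp_Ropp (exp_Ropp (2 * ln Nr)).
have -> : 2 * ln Nr = ln Nr + ln Nr by ring.
rewrite exp_plus exp_ln; last lra.
move=> H'.
apply: (Rle_trans _ (Nr * / (Nr * Nr))).
  apply: Rmult_le_compat_l; lra.
have -> : Nr * / (Nr * Nr) = / Nr by field; lra.
apply: Rinv_le_contravar => //.
apply: lt_0_INR; exact: HM2.
Qed.
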